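(* Let $A[0\ldots n-1]$, $B[0\ldots m-1]$ be sequences over a totally ordered alphabet, let $V=\{(i,j)\mid A[i]=B[j]\}$ and $E=\{(u,v)\mid u=(i,j),\,v=(i',j')\in V,\ i<i',\ j<j',\ A[i]<A[i']\}$. In the forward pass of the sparse-DAG algorithm described in the context, immediately after the update of a vertex $v$ one has $INC[v]=1+\max_{(u,v)\in E}INC[u]$ (the maximum over an empty set being $0$). Analogously, in the backward pass, immediately after the update of $v=(i,j)$ one has $DEC[v]=1+\max DEC[w]$, the maximum taken over all $w=(i',j')\in V$ with $i<i'$, $j<j'$ and $A[i']<A[i]$ (empty maximum $0$).
   Context: Sparse-DAG algorithm: list all pairs $(i,j)\in V$ and sort them lexicographically by $(i$ ascending, $j$ ascending$)$. For each vertex $v=(i,j)$ let $r_J(v)$ be $1$ plus the rank of $j$ among the distinct column indices occurring in $V$, and $r_V(v)$ the rank (starting at $1$) of the value $A[i]$ among the sorted distinct values of $A\cup B$; let $MAX_J=\max_v r_J(v)$. A 2-D range structure stores points with integer keys $(x,y)$ and values, supports $\textsc{Query}(a,b)$ returning the maximum value over stored points with $x\le a$ and $y\le b$ (or $0$ if none), and $\textsc{Update}((x,y),val)$ inserting a point. Forward pass: starting from an empty structure, for each vertex $v$ in sorted order set $INC[v]\gets\textsc{Query}(r_J(v)-1,r_V(v)-1)+1$ and then $\textsc{Update}((r_J(v),r_V(v)),INC[v])$. Backward pass: starting from a new empty structure, for each vertex $v$ in reverse sorted order let $\widehat r_J(v)=MAX_J-r_J(v)+1$, set $DEC[v]\gets\textsc{Query}(\widehat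 r_J(v)-1,r_V(v)-1)+1$ and then $\textsc{Update}((\widehat r_J(v),r_V(v)),DEC[v])$. *)

(* Defs.v *)
From mathcomp Require Import all_boot all_order.
Set Implicit Arguments. Unset Strict Implicit. Unset Printing Implicit Defensive.
Import Order.TTheory.

Section SparseDAG.
Variables (d : Order.disp_t) (T : orderType d) (n m : nat).
Variables (A : 'I_n -> T) (B : 'I_m -> T).

Definition vertex := ('I_n * 'I_m)%type.

Definition Vs : seq vertex :=
  [seq (i, j) | i <- enum 'I_n, j <- [seq j <- enum 'I_m | A i == B j]].

Definition edge (u v : vertex) : bool :=
  [&& (u.1 < v.1)%N, (u.2 < v.2)%N & (A u.1 < A v.1)%O].

Definition cols : seq nat := undup [seq (nat_of_ord v.2) | v <- Vs].
Definition rJ (v : vertex) : nat := (count (fun c => c < v.2) cols).+1.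

Definition vals : seq T := undup ([seq A i | i <- enum 'I_n] ++ [seq B j | j <- enum 'I_m]).
Definition rV (v : vertex) : nat := (count (fun t => (t < A v.1)%O) vals).+1.

Definition MAXJ : nat := \max_(v <- Vs) rJ v.

(* 2-D range structure: the list of stored points ((x,y), val). *)
Definition store := seq ((nat * nat) * nat).
Definition query (S : store) (a b : nat) : nat :=
  \max_(p <- S | (p.1.1 <= a) && (p.1.2 <= b)) p.2.
Definition update (S : store) (xy : nat * nat) (val : nat) : store :=
  rcons S (xy, val).

Definition pass_step (key : vertex -> nat * nat)
    (st : store * seq (vertex * nat)) (v : vertex) :=
  let: (St, L) := st in
  let: (x, y) := key v in
  let val := (query St (x - 1) (y - 1)).+1 in
  (update St (x, y) val, rcons L (v, val)).

Definition run_pass (key : vertex -> nat * nat) (order : seq vertex) :=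
  (foldl (pass_step key) ([::], [::]) order).2.

Definition lookup (L : seq (vertex * nat)) (v : vertex) : nat :=
  nth 0 (map snd L) (index v (map fst L)).

Definition INC (v : vertex) : nat :=
  lookup (run_pass (fun u => (rJ u, rV u)) Vs) v.

Definition DEC (v : vertex) : nat :=
  lookup (run_pass (fun u => (MAXJ - rJ u + 1, rV u)) (rev Vs)) v.

End SparseDAG.

(* Main.v *)
Require Import Defs.
From mathcomp Require Import all_boot all_order.
From mathcomp Require Import zify.
Import Order.TTheory.

Section Gen.
Variables (d : Order.disp_t) (T : orderType d) (n m : nat).
Variables (A : 'I_n -> T) (B : 'I_m -> T).
Variable key : vertex n m -> nat * nat.

Lemma pass_inv s : let: (St, L) := foldl (pass_step key) ([::],[::]) s in
  St = [seq (key x.1, x.2) | x <- L] /\ map fst L = s.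
Proof.
elim/last_ind: s => [|s a IH] //=.
rewrite foldl_rcons.
case: (foldl _ _ s) IH => St L [-> <-] /=.
case Ek: (key a) => [x y] /=.
by rewrite /update map_rcons /= Ek map_rcons.
Qed.

Lemma pass_prefix t x : exists Y, (foldl (pass_step key) x t).2 = x.2 ++ Y.
Proof.
elim: t x => [|a t IH] x /=; first by exists [::]; rewrite cats0.
have [Y ->] := IH (pass_step key x a).
case: x => St L /=; case: (key a) => [p q] /=.
by exists ((a, (query St (p - 1) (q - 1)).+1) :: Y); rewrite cat_rcons.
Qed.

Lemma lookup_map (L : seq (vertex n m * nat)) : uniq (map fst L) ->
  map (fun u => (u, lookup L u)) (map fst L) = L.
Proof.
elim: L => [|[a b] L IH] //= /andP [Ha Hu].
rewrite /lookup /= eqxx /=; congr cons.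
rewrite -[RHS](IH Hu); apply/eq_in_map => u Hu' /=.
rewrite /lookup /=; case: eqP => // E; by rewrite E Hu' in Ha.
Qed.

Lemma pass_main s1 s2 v : uniq (s1 ++ v :: s2) ->
  lookup (run_pass key (s1 ++ v :: s2)) v =
  (\max_(u <- s1 | ((key u).1 <= (key v).1 - 1) && ((key u).2 <= (key v).2 - 1))
     lookup (run_pass key (s1 ++ v :: s2)) u).+1.
Proof.
move=> Hu.
have Hu1 : uniq s1 by move: Hu; rewrite cat_uniq => /andP [].
have Hv1 : v \notin s1 by move: Hu; rewrite cat_uniq /= => /and3P [_ /norP [] ].
rewrite /run_pass foldl_cat.
have := pass_inv s1.
case: (foldl _ _ s1) => St1 L1 [ESt EL].
set L := (foldl _ _ (v :: s2)).2.
have [Y HY] := pass_prefix s2 (pass_step key (St1, L1) v).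
rewrite /= in HY.
move: HY; case Ek: (key v) => [x y] /= HY.
set val := (query St1 (x - 1) (y - 1)).+1 in HY.
have EL' : L = L1 ++ (v, val) :: Y by rewrite /L /= Ek HY cat_rcons.
have Hs : size L1 = size s1 by rewrite -EL size_map.
have Hlk : {in s1, forall u, lookup L u = lookup L1 u}.
  move=> u Hu'; rewrite /lookup EL' !map_cat /= EL index_cat Hu' nth_cat size_map Hs.
  by rewrite index_mem Hu'.
have -> : lookup L v = val.
  rewrite /lookup EL' !map_cat /= EL index_cat (negbTE Hv1) /= eqxx addn0 nth_cat size_map Hs ltnn subnn //.
rewrite /val /query ESt big_map /=.
have HL1 : map (fun u => (u, lookup L1 u)) s1 = L1.
  by have := @lookup_map L1; rewrite EL => H; exact: (H Hu1).
Timeout 10 congr S.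
Timeout 10 rewrite -{1}HL1.
Timeout 10 rewrite big_map /=.
rewrite [LHS]big_seq_cond [RHS]big_seq_cond.
apply: eq_bigr => u /andP [Hu' _].
by rewrite Hlk.
Qed.
End Gen.


Set Implicit Arguments. Unset Strict Implicit. Unset Printing Implicit Defensive.

Lemma count_split (d : Order.disp_t) (T : orderType d) (s : seq T) (x y : T) :
  (x < y)%O ->
  count (fun t => (t < y)%O) s = count (fun t => (t < x)%O) s + count (fun t => (x <= t)%O && (t < y)%O) s.
Proof.
move=> xy; elim: s => //= t s ->.
case: (ltP t x) => tx /=.
  by rewrite (lt_trans tx xy) /=; lia.
case: (ltP t y) => ty /=; lia.
Qed.

Lemma count_lt_iff (d : Order.disp_t) (T : orderType d) (s : seq T) (x y : T) :
  x \in s ->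
  (count (fun t => (t < x)%O) s < count (fun t => (t < y)%O) s)%N = (x < y)%O.
Proof.
move=> xs; case: (ltP x y) => xy.
  rewrite (count_split s xy) -{1}(addn0 (count _ s)) ltn_add2l -has_count.
  by apply/hasP; exists x => //; rewrite lexx.
rewrite ltnNge; apply/negbF; apply: sub_count => t /= ty.
exact: lt_le_trans ty xy.
Qed.

Lemma split_in (T : eqType) (s : seq T) x : x \in s -> exists s1 s2, s = s1 ++ x :: s2.
Proof. by case/splitPr => s1 s2; exists s1, s2. Qed.

Section Spec.
Variables (d : Order.disp_t) (T : orderType d) (n m : nat).
Variables (A : 'I_n -> T) (B : 'I_m -> T).

Definition ltv (u v : vertex n m) : bool :=
  (u.1 < v.1)%N || ((u.1 == v.1 :> nat) && (u.2 < v.2)%N).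

Lemma ltv_irr : irreflexive ltv.
Proof. by move=> u; rewrite /ltv ltnn eqxx ltnn. Qed.

Lemma Vs_pairwise : pairwise ltv (Vs A B).
Proof.
rewrite /Vs.
have : pairwise (fun a b : 'I_n => (a < b)%N) (enum 'I_n).
  have := iota_ltn_sorted 0 n; rewrite -val_enum_ord (sorted_pairwise ltn_trans).
  by rewrite pairwise_map.
have Hj : forall i, pairwise (fun a b : 'I_m => (a < b)%N) [seq j <- enum 'I_m | A i == B j].
  move=> i; apply: pairwise_filter.
  have := iota_ltn_sorted 0 m; rewrite -val_enum_ord (sorted_pairwise ltn_trans).
  by rewrite pairwise_map.
elim: (enum 'I_n) => [|a s IH] //= /andP [Ha Hs].
rewrite pairwise_cat (IH Hs) andbT pairwise_map.
apply/andP; split.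
  apply/allrelP => x y /mapP [j _ ->] /allpairsPdep [i [j' [Hi _ ->]]].
  by rewrite /ltv /= (allP Ha i Hi).
apply: sub_pairwise (Hj a) => j j' /= Hjj'.
by rewrite /ltv /= ltnn eqxx.
Qed.

Lemma Vs_uniq : uniq (Vs A B).
Proof. exact: pairwise_uniq ltv_irr Vs_pairwise. Qed.

Lemma col_in (u : vertex n m) : u \in Vs A B -> (nat_of_ord u.2) \in cols A B.
Proof. by move=> Hu; rewrite /cols mem_undup; apply: map_f. Qed.

Lemma val_in (u : vertex n m) : A u.1 \in vals A B.
Proof. by rewrite /vals mem_undup mem_cat map_f ?mem_enum. Qed.

Lemma rJ_lt (u v : vertex n m) : u \in Vs A B -> (rJ A B u < rJ A B v)%N = (u.2 < v.2)%N.
Proof.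
move=> Hu; rewrite /rJ ltnS.
have := @count_lt_iff _ nat _ (u.2 : nat) (v.2 : nat) (col_in Hu).
by rewrite !ltEnat.
Qed.

Lemma rV_lt (u v : vertex n m) : (rV A B u < rV A B v)%N = (A u.1 < A v.1)%O.
Proof. by rewrite /rV ltnS count_lt_iff // val_in. Qed.

Lemma pw_facts s1 s2 (v : vertex n m) : Vs A B = s1 ++ v :: s2 ->
  (forall u, u \in s1 -> ltv u v) /\ (forall u, u \in s2 -> ltv v u).
Proof.
move=> E; have := Vs_pairwise; rewrite E pairwise_cat /= => /and3P [H1 _ /andP [H2 _]].
split => u Hu; first by apply: (allrelP H1) => //; rewrite mem_head.
exact: (allP H2).
Qed.
End Spec.

Theorem mainTheorem6 (d : Order.disp_t) (T : orderType d) (n m : nat)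
    (A : 'I_n -> T) (B : 'I_m -> T) (v : vertex n m) :
  v \in Vs A B ->
  INC A B v = (1 + \max_(u <- Vs A B | edge A u v) INC A B u)%N /\
  DEC A B v = (1 + \max_(w <- Vs A B | [&& (v.1 < w.1)%N, (v.2 < w.2)%N
                                          & (A w.1 < A v.1)%O]) DEC A B w)%N.
Proof.
move=> Hv.
have LL : forall a b, (0 < b)%N -> (a <= b - 1)%N = (a < b)%N by move=> a b Hb; apply/idP/idP; lia.
have [t1 [t2 Es]] := split_in Hv.
have [F1 F2] := pw_facts Es.
have Hin1 : forall u, u \in t1 -> u \in Vs A B by move=> u Hu; rewrite Es mem_cat Hu.
have Hin2 : forall u, u \in t2 -> u \in Vs A B by move=> u Hu; rewrite Es mem_cat in_cons Hu !orbT.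
split.
  rewrite /INC; have HU := Vs_uniq A B; rewrite Es in HU *.
  rewrite pass_main // big_cat /=.
  rewrite (@big1_seq _ _ _ _ (v :: t2)); last first.
    move=> u; rewrite in_cons => /andP [E /orP [/eqP Euv | Hu]]; first by move: E; rewrite Euv /edge ltnn.
    have := F2 u Hu; move: E; rewrite /edge /ltv => /and3P [E _ _].
    by case/orP => [|/andP [/eqP H _]]; lia.
  rewrite maxn0 add1n; congr S.
  rewrite [LHS]big_seq_cond [RHS]big_seq_cond; apply: eq_bigl => u.
  case Hu: (u \in t1) => //=.
  rewrite !LL // rJ_lt ?Hin1 // rV_lt /edge.
  have := F1 u Hu; rewrite /ltv; case/orP => [-> // | /andP [/eqP E ->]] /=.
  rewrite E ltnn /=; have -> : u.1 = v.1 by apply: val_inj.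
  by rewrite ltxx.
have Er : rev (Vs A B) = rev t2 ++ v :: rev t1 by rewrite Es rev_cat rev_cons cat_rcons.
have HU : uniq (rev t2 ++ v :: rev t1) by rewrite -Er rev_uniq Vs_uniq.
have HM : forall u, u \in Vs A B -> (rJ A B u <= MAXJ A B)%N.
  by move=> u Hu; rewrite /MAXJ (leq_bigmax_seq _ Hu).
rewrite /DEC (perm_big (rev (Vs A B))); last by rewrite perm_sym perm_rev.
rewrite Er pass_main // big_cat /=.
rewrite (@big1_seq _ _ _ _ (v :: rev t1)); last first.
  move=> u; rewrite in_cons mem_rev => /andP [E /orP [/eqP Euv | Hu]]; first by move: E; rewrite Euv ltnn.
  have := F1 u Hu; move: E; rewrite /ltv => /and3P [E _ _].
  by case/orP => [|/andP [/eqP H _]]; lia.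
rewrite maxn0 add1n; congr S.
rewrite [LHS]big_seq_cond [RHS]big_seq_cond; apply: eq_bigl => u.
case Hu: (u \in rev t2) => //=.
move: Hu; rewrite mem_rev => Hu.
have HuV := Hin2 u Hu.
have Hm1 := HM u HuV; have Hm2 := HM v Hv.
have -> : (MAXJ A B - rJ A B u + 1 <= MAXJ A B - rJ A B v + 1 - 1)%N = (rJ A B v < rJ A B u)%N.
  apply/idP/idP => H; lia.
rewrite rJ_lt // LL // rV_lt.
have := F2 u Hu; rewrite /ltv; case/orP => [-> // | /andP [/eqP E ->]] /=.
rewrite E ltnn /=; have -> : u.1 = v.1 by apply: val_inj.
by rewrite ltxx.
Qed.
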